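(* For every $\epsilon\in(-\tfrac12,\tfrac12)$ and all partitions $p,p'$ of $n$, if $p'\le p$ in the dominance order then $|v_\epsilon(p)|\le|v_\epsilon(p')|$, where $|\cdot|$ is the Euclidean norm on $\mathbb R^n$.
   Context: For a partition $p=[p_1,p_2,p_3,\dots]$ of $n$ ($p_1\ge p_2\ge\cdots$), dominance order: $p'\le p$ iff $\sum_{i\le j}p'_i\le\sum_{i\le j}p_i$ for all $j$. For $\epsilon\in(-\frac12,\frac12)$ define $v_\epsilon(p)\in(\epsilon+\mathbb Z)^n$ as the weakly decreasing rearrangement of the $n$-tuple containing, when $\epsilon\ge0$: $\epsilon$ with multiplicity $p_1$, $\epsilon-1$ with multiplicity $p_2$, $\epsilon+1$ with multiplicity $p_3$, $\epsilon-2$ with multiplicity $p_4$, $\epsilon+2$ with multiplicity $p_5$, and so on; when $\epsilon<0$: $\epsilon$ with multiplicity $p_1$, $\epsilon+1$ with multiplicity $p_2$, $\epsilon-1$ with multiplicity $p_3$, $\epsilon+2$ with multiplicity $p_4$, $\epsilon-2$ with multiplicity $p_5$, and so on. *)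

(* Defs.v *)
From HB Require Import structures.
From mathcomp Require Import all_boot all_order all_algebra.
From mathcomp Require Import reals.
Set Implicit Arguments. Unset Strict Implicit. Unset Printing Implicit Defensive.
Import Order.TTheory GRing.Theory Num.Theory.
Local Open Scope ring_scope.

Definition is_partition (n : nat) (p : seq nat) : bool :=
  [&& sorted geq p, all (fun x => 0 < x)%N p & sumn p == n].

Definition dominated (p' p : seq nat) : Prop :=
  forall j : nat, (sumn (take j p') <= sumn (take j p))%N.

(* Integer offset of the i-th part (0-based index i, i.e. part p_{i+1}):
   eps >= 0 : 0, -1, +1, -2, +2, ...
   eps < 0  : 0, +1, -1, +2, -2, ... *)
Definition offset (R : realType) (eps : R) (i : nat) : int :=
  let k : int := ((i.+1)./2)%:Z in
  if (0 <= eps) then (if odd i then - k else k)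
  else (if odd i then k else - k).

Definition v_eps (R : realType) (eps : R) (p : seq nat) : seq R :=
  sort (fun x y : R => y <= x)
    (flatten [seq nseq (nth 0%N p i) (eps + (offset eps i)%:~R) | i <- iota 0 (size p)]).

Definition euclid_norm (R : realType) (v : seq R) : R :=
  Num.sqrt (\sum_(x <- v) x ^+ 2).

(* Main.v *)
Require Import Defs.
From HB Require Import structures.
From mathcomp Require Import all_boot all_order all_algebra.
From mathcomp Require Import reals.
From mathcomp Require Import ring lra zify.
Import Order.TTheory GRing.Theory Num.Theory.
Local Open Scope ring_scope.

Section Aux.
Variable R : realType.

Lemma sum_nseq (k : nat) (x : R) : \sum_(y <- nseq k x) y ^+ 2 = k%:R * x ^+ 2.
Proof.
elim: k => [|k IH]; first by rewrite big_nil mul0r.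
by rewrite /= big_cons IH mulrSr mulrDl mul1r addrC.
Qed.

Lemma sumn_take (q : seq nat) (k : nat) :
  sumn (take k q) = (\sum_(i < k) nth 0%N q i)%N.
Proof.
elim: q k => [|x q IH] [|k] //=.
- by rewrite big_ord0.
- by rewrite big1 // => i _; rewrite nth_nil.
- by rewrite big_ord0.
- by rewrite big_ord_recl /= IH.
Qed.

Lemma abel (a c : nat -> R) (N : nat) :
  \sum_(i < N) a i * c i =
  (\sum_(i < N) a i) * c N
    - \sum_(i < N) (\sum_(j < i.+1) a j) * (c i.+1 - c i).
Proof.
elim: N => [|N IH]; first by rewrite !big_ord0 mul0r subr0.
rewrite big_ord_recr /= IH [in RHS]big_ord_recr /= [in RHS]big_ord_recr /=.
rewrite [\sum_(j < N.+1) a j]big_ord_recr /=. ring.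
Qed.

Definition cc (eps : R) (i : nat) : R := (eps + (offset eps i)%:~R) ^+ 2.

Lemma off_even (eps : R) m :
  (offset eps (m.*2))%:~R = if 0 <= eps then (m%:R : R) else - m%:R.
Proof.
have e : (m.*2).+1./2 = m by lia.
rewrite /offset e odd_double; case: ifP => _; rewrite ?mulrNz; by rewrite -pmulrn.
Qed.

Lemma off_odd (eps : R) m :
  (offset eps (m.*2).+1)%:~R = if 0 <= eps then - (m%:R + 1) : R else m%:R + 1.
Proof.
have e : (m.*2).+2./2 = m.+1 by lia.
rewrite /offset e oddS odd_double /=; case: ifP => _; rewrite ?mulrNz;
  by rewrite -pmulrn mulrSr.
Qed.

Lemma cc_mono (eps : R) (i : nat) :
  - (1 / 2) < eps -> eps < 1 / 2 -> cc eps i <= cc eps i.+1.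
Proof.
move=> h1 h2.
have := odd_double_half i; set m := i./2 => Hi.
have mge : 0 <= (m%:R : R) by rewrite ler0n.
rewrite /cc.
case Ho: (odd i); move: Hi; rewrite Ho => Hi.
- have -> : i = (m.*2).+1 by move: Hi => /=; lia.
  have -> : (m.*2).+2 = (m.+1).*2 by [].
  rewrite off_odd off_even mulrSr.
  case: ifP => He; nra.
- have -> : i = (m.*2) by move: Hi => /=; lia.
  rewrite off_odd off_even.
  case: ifP => He; nra.
Qed.
End Aux.
Arguments cc {R}.
Arguments cc_mono {R}.
Arguments abel {R}.
Arguments sum_nseq {R}.

Lemma normsq {R : realType} (eps : R) (q : seq nat) (N : nat) :
  (size q <= N)%N ->
  \sum_(x <- v_eps eps q) x ^+ 2 = \sum_(i < N) (nth 0%N q i)%:R * cc eps i.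
Proof.
move=> hN.
rewrite /v_eps.
set s := flatten _.
have P : perm_eq (sort (fun x y : R => y <= x) s) s by rewrite perm_sort perm_refl.
rewrite (perm_big _ P) /s big_flatten big_map.
under eq_bigr => i _ do rewrite sum_nseq.
have -> : iota 0 (size q) = index_iota 0 (size q) by rewrite /index_iota subn0.
rewrite big_mkord.
rewrite [LHS](big_ord_widen _ (fun i => (nth 0%N q i)%:R * cc eps i) hN) [LHS]big_mkcond.
apply: eq_bigr => i _; case: ifP => // /negbT; rewrite -leqNgt => h.
by rewrite nth_default // mul0r.
Qed.

Lemma partial (R : realType) (q : seq nat) k :
  \sum_(j < k) ((nth 0%N q j)%:R : R) = (sumn (take k q))%:R.
Proof. by rewrite sumn_take natr_sum. Qed.

Theorem lemmaA6 (R : realType) (eps : R) (n : nat) (p p' : seq nat) :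
  - (1 / 2) < eps -> eps < 1 / 2 ->
  is_partition n p -> is_partition n p' ->
  dominated p' p ->
  euclid_norm (v_eps eps p) <= euclid_norm (v_eps eps p').
Proof.
move=> h1 h2 /and3P [_ _ /eqP sp] /and3P [_ _ /eqP sp'] dom.
rewrite /euclid_norm; apply: ler_wsqrtr.
set N := maxn (size p) (size p').
rewrite (normsq eps _ _ (leq_maxl (size p) (size p'))) (normsq eps _ _ (leq_maxr (size p) (size p'))).
rewrite !(abel (fun i => (nth 0%N _ i)%:R)) !partial.
rewrite !take_oversize ?leq_maxl ?leq_maxr // sp sp'.
rewrite lerD2l lerN2; apply: ler_sum => i _.
rewrite !partial; apply: ler_wpM2r.
  by rewrite subr_ge0; apply: cc_mono.
by rewrite ler_nat.
Qed.
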